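(* Let $n\ge 2$ be an integer, $\tau,\gamma>0$, and $$F(\delta,\phi)=\tau\big[(n-2)(n+\delta)-2\phi(n-1)\delta\big]\big[(2-\delta)(n+\delta)+2\phi(n-1)\delta\big]-\gamma\delta(n+\delta)^{2}.$$ Let $\delta_0=\frac{2\tau(n-2)}{\gamma+\tau(n-2)}$. Then there is a unique smooth function $\delta(\phi)$ near $\phi=0$ with $\delta(0)=\delta_0$ and $F(\delta(\phi),\phi)=0$, and $$\delta(\phi)=\delta_0+\phi\,\frac{2\tau(n-1)\delta_{0}(n-4+\delta_{0})}{\gamma(n+3\delta_{0})+\tau(n-2)(n+3\delta_{0}-4)}+O(\phi^2).$$ Moreover, setting $\alpha(\phi)=(n-2)-(n-1)\phi\frac{2\delta(\phi)}{n+\delta(\phi)}$, $$\alpha(\phi)=(n-2)-\phi\,\frac{4\tau(n-1)(n-2)}{\tau(n+2)(n-2)+\gamma n}+O(\phi^2),$$ so the threshold $R^{cci}=\tau\alpha/\gamma$ satisfies $$R^{cci}=\frac{(n-2)\tau}{\gamma}-\phi\frac{\tau}{\gamma}\left(\frac{4\tau(n-1)(n-2)}{\tau(n+2)(n-2)+\gamma n}\right)+O(\phi^2).$$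
   Context: $F(\delta,\phi)=0$ characterises the non-trivial quasi-equilibrium of the fast variable $\delta=[II]/[I]$ in the pairwise SIR model on an $n$-regular network with clustering coefficient $\phi$ under the compact improved closure; the corresponding $\alpha=[SI]/[I]$ is given by $\alpha=(n-2)-(n-1)\phi\frac{2\delta}{n+\delta}$, and the epidemic threshold is $R^{cci}=\tau\alpha/\gamma$, with $\tau$ the per-link infection rate and $\gamma$ the recovery rate. *)

(* Defs.v *)
From Stdlib Require Import Reals Lra.
Open Scope R_scope.

Definition F (n : nat) (tau gamma delta phi : R) : R :=
  tau * ((INR n - 2) * (INR n + delta) - 2 * phi * (INR n - 1) * delta)
      * ((2 - delta) * (INR n + delta) + 2 * phi * (INR n - 1) * delta)
  - gamma * delta * (INR n + delta) ^ 2.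

Definition delta0 (n : nat) (tau gamma : R) : R :=
  2 * tau * (INR n - 2) / (gamma + tau * (INR n - 2)).

(* alpha = [SI]/[I] as a function of delta and phi *)
Definition alpha (n : nat) (delta phi : R) : R :=
  (INR n - 2) - (INR n - 1) * phi * (2 * delta / (INR n + delta)).

Definition Rcci (tau gamma a : R) : R := tau * a / gamma.

Definition smooth_on (a b : R) (f : R -> R) : Prop :=
  exists D : nat -> R -> R,
    (forall x, a < x < b -> D 0%nat x = f x) /\
    (forall (k : nat) (x : R), a < x < b -> derivable_pt_lim (D k) x (D (S k) x)).

Definition bigO2 (h : R -> R) : Prop :=
  exists C e : R, 0 < e /\ forall phi, Rabs phi < e -> Rabs (h phi) <= C * phi ^ 2.

(* Main.v *)
Require Import Defs.
From Stdlib Require Import Reals.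
Open Scope R_scope.
From Stdlib Require Import Lra Lia.
From Coquelicot Require Import Coquelicot.
Open Scope R_scope.

Definition Lf N p d := (N-2)*(N+d) - 2*p*(N-1)*d.
Definition Qf N p d := (2-d)*(N+d) + 2*p*(N-1)*d.
Definition Aa N tau gamma x y p :=
  tau*((N-2 - 2*p*(N-1)) * Qf N p x + Lf N p y * ((2 - N + 2*p*(N-1)) - x - y))
  - gamma*(x*x + x*y + y*y + 2*N*(x+y) + N*N).
Definition Bb N tau x p q := tau*(2*(N-1)*x)*(Lf N p x - Qf N q x).

Lemma F_x n tau gamma x y p :
  F n tau gamma x p - F n tau gamma y p = (x - y) * Aa (INR n) tau gamma x y p.
Proof. unfold F, Aa, Lf, Qf. ring. Qed.
Lemma F_p n tau gamma x p q :
  F n tau gamma x q - F n tau gamma x p = (q - p) * Bb (INR n) tau x p q.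
Proof. unfold F, Bb, Lf, Qf. ring. Qed.

Lemma A0_val n tau gamma : let N := INR n in let d0 := delta0 n tau gamma in
  0 < tau -> 0 < gamma -> 2 <= N ->
  Aa N tau gamma d0 d0 0 = - (N + d0)^2 * (tau*(N-2) + gamma).
Proof. intros N d0 Ht Hg HN. unfold d0, delta0, Aa, Lf, Qf. fold N.
  field. nra. Qed.
Lemma F0 n tau gamma : 0 < tau -> 0 < gamma -> 2 <= INR n ->
  F n tau gamma (delta0 n tau gamma) 0 = 0.
Proof. intros. unfold F, delta0. field. nra. Qed.
Lemma c_plus {U : UniformSpace} (f g : U -> R) x :
  continuous f x -> continuous g x -> continuous (fun y => f y + g y) x.
Proof. intros; exact (continuous_plus f g x H H0). Qed.
Lemma c_mult {U : UniformSpace} (f g : U -> R) x :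
  continuous f x -> continuous g x -> continuous (fun y => f y * g y) x.
Proof. intros; exact (continuous_mult f g x H H0). Qed.
Lemma c_opp {U : UniformSpace} (f : U -> R) x :
  continuous f x -> continuous (fun y => - f y) x.
Proof. intros; exact (continuous_opp f x H). Qed.
Lemma c_minus {U : UniformSpace} (f g : U -> R) x :
  continuous f x -> continuous g x -> continuous (fun y => f y - g y) x.
Proof. intros; unfold Rminus; apply c_plus; auto; apply c_opp; auto. Qed.
Lemma c_const {U : UniformSpace} (c : R) (x : U) : continuous (fun _ => c) x.
Proof. apply continuous_const. Qed.
Lemma c_inv {U : UniformSpace} (f : U -> R) x :
  continuous f x -> f x <> 0 -> continuous (fun y => / f y) x.
Proof. intros. apply (continuous_comp f Rinv). auto.
  apply continuity_pt_filterlim. apply continuity_pt_inv; auto. apply continuity_pt_id. Qed.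
Lemma c31 (a b c : R) : continuous (fun p : R*(R*R) => fst p) (a,(b,c)).
Proof. apply continuous_fst. Qed.
Lemma c32 (a b c : R) : continuous (fun p : R*(R*R) => fst (snd p)) (a,(b,c)).
Proof. apply (continuous_comp snd fst (a,(b,c))). apply continuous_snd. apply continuous_fst. Qed.
Lemma c33 (a b c : R) : continuous (fun p : R*(R*R) => snd (snd p)) (a,(b,c)).
Proof. apply (continuous_comp snd snd (a,(b,c))). apply continuous_snd. apply continuous_snd. Qed.
Lemma c21 (a b : R) : continuous (fun p : R*R => fst p) (a,b).
Proof. apply continuous_fst. Qed.
Lemma c22 (a b : R) : continuous (fun p : R*R => snd p) (a,b).
Proof. apply continuous_snd. Qed.
Ltac cont := repeat match goal with
  | |- continuous (fun y => _ + _) _ => apply c_plus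
  | |- continuous (fun y => _ - _) _ => apply c_minus
  | |- continuous (fun y => _ * _) _ => apply c_mult
  | |- continuous (fun y => - _) _ => apply c_opp
  | |- continuous (fun y => fst y) (_,(_,_)) => apply c31
  | |- continuous (fun y => fst (snd y)) (_,(_,_)) => apply c32
  | |- continuous (fun y => snd (snd y)) (_,(_,_)) => apply c33
  | |- continuous (fun y => fst y) (_,_) => apply c21
  | |- continuous (fun y => snd y) (_,_) => apply c22
  | |- continuous fst (_,(_,_)) => apply c31
  | |- continuous fst (_,_) => apply c21
  | |- continuous snd (_,_) => apply c22
  | |- continuous (fun y => _) _ => apply c_const
  end.

Lemma contA N tau gamma a b c :
  continuous (fun p : R*(R*R) => Aa N tau gamma (fst p) (fst (snd p)) (snd (snd p))) (a,(b,c)).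
Proof. unfold Aa, Lf, Qf. cont. Qed.
Lemma contB N tau a b c :
  continuous (fun p : R*(R*R) => Bb N tau (fst p) (fst (snd p)) (snd (snd p))) (a,(b,c)).
Proof. unfold Bb, Lf, Qf. cont. Qed.

Lemma ballR (x y e : R) : Rabs (y - x) < e -> ball x e y.
Proof. intros; exact H. Qed.

Lemma cont3_ball (h : R -> R -> R -> R) x0 y0 z0 e :
  continuous (fun p : R*(R*R) => h (fst p) (fst (snd p)) (snd (snd p))) (x0,(y0,z0)) ->
  0 < e -> exists r, 0 < r /\ forall x y z, Rabs (x-x0) < r -> Rabs (y-y0) < r ->
    Rabs (z - z0) < r -> Rabs (h x y z - h x0 y0 z0) < e.
Proof.
  intros Hc He.
  assert (Hl := Hc (ball (h x0 y0 z0) (mkposreal e He)) (locally_ball _ _)).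
  destruct Hl as [r Hr]. exists r. split. apply cond_pos.
  intros x y z Hx Hy Hz.
  apply (Hr (x,(y,z))). repeat split; apply ballR; simpl; auto.
Qed.

Lemma cont2_ball (h : R -> R -> R) x0 y0 e :
  continuous (fun p : R*R => h (fst p) (snd p)) (x0,y0) ->
  0 < e -> exists r, 0 < r /\ forall x y, Rabs (x-x0) < r -> Rabs (y-y0) < r ->
    Rabs (h x y - h x0 y0) < e.
Proof.
  intros Hc He.
  assert (Hl := Hc (ball (h x0 y0) (mkposreal e He)) (locally_ball _ _)).
  destruct Hl as [r Hr]. exists r. split. apply cond_pos.
  intros x y Hx Hy.
  apply (Hr (x,y)). repeat split; apply ballR; simpl; auto.
Qed.

Lemma d_plus (f g : R -> R) x a b : is_derive f x a -> is_derive g x b ->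
  is_derive (fun y => f y + g y) x (a + b).
Proof. intros. exact (is_derive_plus f g x a b H H0). Qed.
Lemma d_mult (f g : R -> R) x a b : is_derive f x a -> is_derive g x b ->
  is_derive (fun y => f y * g y) x (a * g x + f x * b).
Proof. intros. apply (is_derive_mult f g x a b H H0). intros; apply Rmult_comm. Qed.
Lemma d_opp (f : R -> R) x a : is_derive f x a -> is_derive (fun y => - f y) x (- a).
Proof. intros. exact (is_derive_opp f x a H). Qed.
Lemma d_ext (f : R -> R) x a b : is_derive f x a -> a = b -> is_derive f x b.
Proof. intros; subst; auto. Qed.

Lemma d_const (c x : R) : is_derive (fun _ => c) x 0.
Proof. exact (@is_derive_const R_AbsRing R_NormedModule c x). Qed.
Lemma d_id (x : R) : is_derive (fun y => y) x 1.
Proof. exact (@is_derive_id R_AbsRing x). Qed.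

Fixpoint Ck (a b : R) (k : nat) (f : R -> R) : Prop :=
  match k with
  | O => True
  | S k => exists f', (forall x, a < x < b -> is_derive f x (f' x)) /\ Ck a b k f'
  end.

Lemma Ck_weak a b k : forall f, Ck a b (S k) f -> Ck a b k f.
Proof. induction k; intros f H; simpl; auto.
  destruct H as [f' [H1 H2]]. exists f'. split; auto. Qed.

Lemma Ck_const a b k c : Ck a b k (fun _ => c).
Proof. revert c; induction k; intro c; simpl; auto. exists (fun _ => 0). split; auto.
  intros. apply d_const. Qed.

Lemma Ck_id a b k : Ck a b k (fun x => x).
Proof. destruct k; simpl; auto. exists (fun _ => 1). split. intros; apply d_id.
  apply Ck_const. Qed.

Lemma Ck_plus a b k : forall f g, Ck a b k f -> Ck a b k g -> Ck a b k (fun x => f x + g x).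
Proof. induction k; intros f g Hf Hg; simpl; auto.
  destruct Hf as [f' [Hf1 Hf2]], Hg as [g' [Hg1 Hg2]].
  exists (fun x => f' x + g' x). split; auto. intros; apply d_plus; auto. Qed.

Lemma Ck_opp a b k : forall f, Ck a b k f -> Ck a b k (fun x => - f x).
Proof. induction k; intros f Hf; simpl; auto.
  destruct Hf as [f' [Hf1 Hf2]].
  exists (fun x => - f' x). split; auto. intros; apply d_opp; auto. Qed.

Lemma Ck_minus a b k f g : Ck a b k f -> Ck a b k g -> Ck a b k (fun x => f x - g x).
Proof. intros; unfold Rminus; apply Ck_plus; auto; apply Ck_opp; auto. Qed.

Lemma Ck_mult a b k : forall f g, Ck a b k f -> Ck a b k g -> Ck a b k (fun x => f x * g x).
Proof. induction k; intros f g Hf Hg; simpl; auto.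
  assert (Hf0 := Ck_weak _ _ _ _ Hf). assert (Hg0 := Ck_weak _ _ _ _ Hg).
  destruct Hf as [f' [Hf1 Hf2]], Hg as [g' [Hg1 Hg2]].
  exists (fun x => f' x * g x + f x * g' x). split.
  intros; apply d_mult; auto.
  apply Ck_plus; apply IHk; auto. Qed.

Lemma inv_eq (a c : R) : c <> 0 -> -a / c^2 = -a * (/c * /c).
Proof. intros; field; auto. Qed.

Lemma Ck_inv a b k : forall f, (forall x, a < x < b -> f x <> 0) ->
  Ck a b k f -> Ck a b k (fun x => / f x).
Proof. induction k; intros f Hnz Hf; simpl; auto.
  assert (Hf0 := Ck_weak _ _ _ _ Hf).
  destruct Hf as [f' [Hf1 Hf2]].
  exists (fun x => - f' x * (/ f x * / f x)). split.
  intros x Hx. eapply d_ext. apply is_derive_inv. apply Hf1; auto. apply Hnz; auto.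
  apply inv_eq. apply Hnz; auto.
  apply Ck_mult. apply Ck_opp; auto. apply Ck_mult; apply IHk; auto. Qed.

Lemma Ck_div a b k f g : (forall x, a < x < b -> g x <> 0) ->
  Ck a b k f -> Ck a b k g -> Ck a b k (fun x => f x / g x).
Proof. intros. unfold Rdiv. apply Ck_mult; auto. apply Ck_inv; auto. Qed.

Lemma open_loc a b x : a < x < b -> forall (P : R -> Prop),
  (forall y, a < y < b -> P y) -> locally x P.
Proof. intros Hx P HP.
  assert (He : 0 < Rmin (x - a) (b - x)) by (apply Rmin_pos; lra).
  exists (mkposreal _ He). intros y Hy. apply HP.
  change (Rabs (y - x) < Rmin (x - a) (b - x)) in Hy.
  assert (Rmin (x-a) (b-x) <= x - a) by apply Rmin_l.
  assert (Rmin (x-a) (b-x) <= b - x) by apply Rmin_r.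
  apply Rabs_def2 in Hy. lra. Qed.

Lemma Ck_Derive a b k : forall f, Ck a b (S k) f ->
  forall x, a < x < b -> is_derive (Derive_n f k) x (Derive_n f (S k) x).
Proof. induction k; intros f Hf x Hx.
  - destruct Hf as [f' [H1 _]]. simpl. specialize (H1 x Hx).
    change (is_derive f x (Derive f x)). rewrite (is_derive_unique _ _ _ H1). exact H1.
  - destruct Hf as [f' [H1 H2]].
    assert (E : forall j y, a < y < b -> Derive_n f (S j) y = Derive_n f' j y).
    { intros j y Hy. replace (S j) with (j + 1)%nat by lia.
      rewrite <- Derive_n_comp.
      apply Derive_n_ext_loc. apply (open_loc a b y Hy). intros z Hz.
      apply is_derive_unique. apply H1; auto. }
    rewrite E by auto.
    apply is_derive_ext_loc with (f := Derive_n f' k).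
    apply (open_loc a b x Hx). intros z Hz. rewrite E; auto.
    apply IHk; auto. Qed.

Lemma Ck_smooth a b f : (forall k, Ck a b k f) -> smooth_on a b f.
Proof. intros H. exists (Derive_n f). split. intros; reflexivity.
  intros k x Hx. apply is_derive_Reals. apply (Ck_Derive a b); auto. Qed.


Lemma dscal (k c : R) : is_derive (fun x => x * k) c k.
Proof. apply d_ext with (a := 1 * k + c * 0). apply (d_mult (fun x => x) (fun _ => k)). apply d_id. apply d_const. rewrite Rmult_1_l, Rmult_0_r, Rplus_0_r; reflexivity. Qed.

Lemma mvt_bound (g g' : R -> R) (t M : R) :
  (forall c, Rmin 0 t <= c <= Rmax 0 t -> derivable_pt_lim g c (g' c)) ->
  (forall c, Rmin 0 t <= c <= Rmax 0 t -> Rabs (g' c) <= M * Rabs c) ->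
  Rabs (g t - g 0) <= M * t ^ 2.
Proof. intros Hd Hb.
  destruct (Rtotal_order 0 t) as [Ht|[Ht|Ht]].
  - rewrite Rmin_left, Rmax_right in * by lra.
    destruct (MVT_cor2 g g' 0 t Ht Hd) as [c [Hc1 Hc2]]. rewrite Hc1.
    rewrite Rabs_mult. specialize (Hb c ltac:(lra)).
    rewrite (Rabs_right c) in Hb by lra. rewrite (Rabs_right (t-0)) by lra.
    assert (0 <= Rabs (g' c)) by apply Rabs_pos.
    assert (0 <= M) by nra. assert (M * Rabs c <= M * Rabs t).
    { apply Rmult_le_compat_l; auto. rewrite !Rabs_right by lra. lra. }
    rewrite !Rabs_right in * by lra. simpl. nra.
  - subst. replace (g 0 - g 0) with 0 by ring. rewrite Rabs_R0. simpl. lra.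
  - rewrite Rmin_right, Rmax_left in * by lra.
    destruct (MVT_cor2 g g' t 0 Ht Hd) as [c [Hc1 Hc2]].
    replace (g t - g 0) with (- (g 0 - g t)) by ring. rewrite Rabs_Ropp. rewrite Hc1.
    rewrite Rabs_mult. specialize (Hb c ltac:(lra)).
    rewrite (Rabs_left c) in Hb by lra. rewrite (Rabs_right (0-t)) by lra.
    assert (0 <= Rabs (g' c)) by apply Rabs_pos.
    assert (0 <= M) by nra. assert (M * (- c) <= M * (- t)).
    { apply Rmult_le_compat_l; auto. lra. }
    assert (Rabs (g' c) * (0 - t) <= M * (-c) * (0 - t)).
    { apply Rmult_le_compat_r; lra. }
    simpl. nra.
Qed.

Lemma mvt_bound1 (g g' : R -> R) (t M : R) :
  (forall c, Rmin 0 t <= c <= Rmax 0 t -> derivable_pt_lim g c (g' c)) ->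
  (forall c, Rmin 0 t <= c <= Rmax 0 t -> Rabs (g' c) <= M) ->
  Rabs (g t - g 0) <= M * Rabs t.
Proof. intros Hd Hb.
  destruct (Rtotal_order 0 t) as [Ht|[Ht|Ht]].
  - rewrite Rmin_left, Rmax_right in * by lra.
    destruct (MVT_cor2 g g' 0 t Ht Hd) as [c [Hc1 Hc2]]. rewrite Hc1.
    rewrite Rabs_mult. specialize (Hb c ltac:(lra)).
    rewrite (Rabs_right (t-0)) by lra. rewrite (Rabs_right t) by lra.
    assert (0 <= Rabs (g' c)) by apply Rabs_pos. nra.
  - subst. replace (g 0 - g 0) with 0 by ring. rewrite Rabs_R0. lra.
  - rewrite Rmin_right, Rmax_left in * by lra.
    destruct (MVT_cor2 g g' t 0 Ht Hd) as [c [Hc1 Hc2]].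
    replace (g t - g 0) with (- (g 0 - g t)) by ring. rewrite Rabs_Ropp. rewrite Hc1.
    rewrite Rabs_mult. specialize (Hb c ltac:(lra)).
    rewrite (Rabs_right (0-t)) by lra. rewrite (Rabs_left t) by lra.
    assert (0 <= Rabs (g' c)) by apply Rabs_pos. nra.
Qed.

Lemma abs_bounds x : - Rabs x <= x <= Rabs x.
Proof. unfold Rabs; destruct Rcase_abs; lra. Qed.

Lemma taylor2 e f : 0 < e -> smooth_on (-e) e f ->
  exists l, derivable_pt_lim f 0 l /\ bigO2 (fun p => f p - (f 0 + p * l)).
Proof.
  intros He [D [HD0 HD]].
  exists (D 1%nat 0). split.
  { apply is_derive_Reals. apply is_derive_ext_loc with (f := D 0%nat).
    apply (open_loc (-e) e 0 ltac:(lra)). intros; apply HD0; auto.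
    apply is_derive_Reals. apply HD. lra. }
  set (e2 := e / 2).
  assert (Hc : forall c, -e2 <= c <= e2 -> continuity_pt (D 2%nat) c).
  { intros c Hc. apply derivable_continuous_pt.
    exists (D 3%nat c). apply HD. unfold e2 in Hc; lra. }
  destruct (continuity_ab_maj (D 2%nat) (-e2) e2 ltac:(unfold e2; lra) Hc) as [M1 [HM1 _]].
  destruct (continuity_ab_min (D 2%nat) (-e2) e2 ltac:(unfold e2; lra) Hc) as [M2 [HM2 _]].
  set (M := Rabs (D 2%nat M1) + Rabs (D 2%nat M2)).
  assert (HM : forall c, -e2 <= c <= e2 -> Rabs (D 2%nat c) <= M).
  { intros c Hc'. specialize (HM1 c Hc'). specialize (HM2 c Hc'). unfold M.
    apply Rabs_le. split.
    - assert (- Rabs (D 2%nat M2) <= D 2%nat M2) by (apply abs_bounds).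
      assert (0 <= Rabs (D 2%nat M1)) by apply Rabs_pos. lra.
    - assert (D 2%nat M1 <= Rabs (D 2%nat M1)) by apply RRle_abs.
      assert (0 <= Rabs (D 2%nat M2)) by apply Rabs_pos. lra. }
  assert (H1 : forall t, -e2 <= t <= e2 -> Rabs (D 1%nat t - D 1%nat 0) <= M * Rabs t).
  { intros t Ht. apply mvt_bound1 with (g' := D 2%nat).
    - intros c Hc'. apply HD.
      assert (Rmin 0 t <= 0 <= Rmax 0 t) by (split; [apply Rmin_l|apply Rmax_l]).
      assert (- e2 <= Rmin 0 t) by (apply Rmin_glb; lra).
      assert (Rmax 0 t <= e2) by (apply Rmax_lub; lra). unfold e2 in *; lra.
    - intros c Hc'. apply HM.
      assert (- e2 <= Rmin 0 t) by (apply Rmin_glb; lra).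
      assert (Rmax 0 t <= e2) by (apply Rmax_lub; lra). lra. }
  exists M, e2. split. unfold e2; lra.
  intros p Hp. apply Rabs_def2 in Hp.
  rewrite <- !HD0 by (unfold e2 in *; lra).
  set (g := fun x => D 0%nat x - x * D 1%nat 0).
  replace (D 0%nat p - (D 0%nat 0 + p * D 1%nat 0)) with (g p - g 0) by (unfold g; ring).
  apply mvt_bound with (g' := fun x => D 1%nat x - D 1%nat 0).
  - intros c Hc'. unfold g.
    assert (Rmin 0 p <= 0 <= Rmax 0 p) by (split; [apply Rmin_l|apply Rmax_l]).
    assert (- e2 <= Rmin 0 p) by (apply Rmin_glb; lra).
    assert (Rmax 0 p <= e2) by (apply Rmax_lub; lra).
    apply is_derive_Reals. apply (is_derive_minus (fun x => D 0%nat x) (fun x => x * D 1%nat 0)).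
    apply is_derive_Reals. apply HD. unfold e2 in *; lra.
    apply dscal.
  - intros c Hc'. apply H1.
    assert (- e2 <= Rmin 0 p) by (apply Rmin_glb; lra).
    assert (Rmax 0 p <= e2) by (apply Rmax_lub; lra). lra.
Qed.
Lemma contF n tau gamma p : continuity (fun z => - F n tau gamma z p).
Proof. unfold F. reg. Qed.

Lemma INR2 n : (2 <= n)%nat -> 2 <= INR n.
Proof. intros H. apply le_INR in H. simpl in H. lra. Qed.

Lemma d0_bounds n tau gamma : 0 < tau -> 0 < gamma -> 2 <= INR n ->
  0 <= delta0 n tau gamma < 2.
Proof. intros. unfold delta0. split.
  apply Rmult_le_pos. nra. left; apply Rinv_0_lt_compat; nra.
  apply Rmult_lt_reg_r with (gamma + tau * (INR n - 2)). nra.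
  unfold Rdiv. rewrite Rmult_assoc, Rinv_l by nra. nra. Qed.

Lemma setup n tau gamma : (2 <= n)%nat -> 0 < tau -> 0 < gamma ->
  exists r c0 K, 0 < r /\ r <= 1 /\ 0 < c0 /\ 0 <= K /\
   (forall x y p, Rabs (x - delta0 n tau gamma) <= r -> Rabs (y - delta0 n tau gamma) <= r ->
      Rabs p <= r -> Aa (INR n) tau gamma x y p <= - c0) /\
   (forall x p q, Rabs (x - delta0 n tau gamma) <= r -> Rabs p <= r -> Rabs q <= r ->
      Rabs (Bb (INR n) tau x p q) <= K).
Proof.
  intros Hn Ht Hg. assert (HN := INR2 n Hn).
  set (d0 := delta0 n tau gamma).
  assert (Hd0 := d0_bounds n tau gamma Ht Hg HN). fold d0 in Hd0.
  set (A0 := Aa (INR n) tau gamma d0 d0 0).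
  assert (HA0 : A0 = - (INR n + d0)^2 * (tau*(INR n - 2) + gamma)) by (apply A0_val; auto).
  assert (HA0n : A0 < 0). { rewrite HA0. assert (0 < (INR n + d0)^2) by (apply pow_lt; lra).
    assert (0 < tau*(INR n-2)+gamma) by nra. nra. }
  set (c0 := - A0 / 2).
  destruct (cont3_ball (Aa (INR n) tau gamma) d0 d0 0 c0 (contA _ _ _ _ _ _) ltac:(unfold c0; lra))
    as [r1 [Hr1 H1]].
  destruct (cont3_ball (Bb (INR n) tau) d0 0 0 1 (contB _ _ _ _ _) ltac:(lra))
    as [r2 [Hr2 H2]].
  set (r := Rmin 1 (Rmin r1 r2) / 2).
  assert (Hr : 0 < Rmin 1 (Rmin r1 r2)) by (apply Rmin_pos; [lra| apply Rmin_pos; lra]).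
  assert (Hm1 : Rmin 1 (Rmin r1 r2) <= 1) by apply Rmin_l.
  assert (Hm2 : Rmin 1 (Rmin r1 r2) <= r1) by (eapply Rle_trans; [apply Rmin_r| apply Rmin_l]).
  assert (Hm3 : Rmin 1 (Rmin r1 r2) <= r2) by (eapply Rle_trans; [apply Rmin_r| apply Rmin_r]).
  exists r, c0, (Rabs (Bb (INR n) tau d0 0 0) + 1).
  split. unfold r; lra. split. unfold r; lra. split. unfold c0; lra. split.
  assert (0 <= Rabs (Bb (INR n) tau d0 0 0)) by apply Rabs_pos. lra.
  split.
  - intros x y p Hx Hy Hp. assert (HH := H1 x y p ltac:(unfold r in *; lra) ltac:(unfold r in *; lra)
      ltac:(rewrite Rminus_0_r; unfold r in *; lra)).
    fold A0 in HH. apply Rabs_def2 in HH. unfold c0 in *. lra.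
  - intros x p q Hx Hp Hq. assert (HH := H2 x p q ltac:(unfold r in *; lra)
      ltac:(rewrite Rminus_0_r; unfold r in *; lra) ltac:(rewrite Rminus_0_r; unfold r in *; lra)).
    assert (Rabs (Bb (INR n) tau x p q) - Rabs (Bb (INR n) tau d0 0 0) <=
            Rabs (Bb (INR n) tau x p q - Bb (INR n) tau d0 0 0)) by apply Rabs_triang_inv.
    lra.
Qed.

Definition Phi N tau gamma u v := - Bb N tau u v v / Aa N tau gamma u u v.

Section S.
Context (n : nat) (tau gamma r c0 K s : R) (d : R -> R).
Context (HA : forall x y p, Rabs (x - delta0 n tau gamma) <= r -> Rabs (y - delta0 n tau gamma) <= r ->
      Rabs p <= r -> Aa (INR n) tau gamma x y p <= - c0).
Context (HB : forall x p q, Rabs (x - delta0 n tau gamma) <= r -> Rabs p <= r -> Rabs q <= r ->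
      Rabs (Bb (INR n) tau x p q) <= K).
Context (Hc0 : 0 < c0) (HK : 0 <= K) (Hs : 0 < s) (Hsr : s <= r).
Context (Hd : forall p, Rabs p < s -> Rabs (d p - delta0 n tau gamma) <= r /\ F n tau gamma (d p) p = 0).

Lemma uniqF x y p : Rabs (x - delta0 n tau gamma) <= r -> Rabs (y - delta0 n tau gamma) <= r ->
  Rabs p <= r -> F n tau gamma x p = 0 -> F n tau gamma y p = 0 -> x = y.
Proof. intros Hx Hy Hp Fx Fy. assert (E := F_x n tau gamma x y p).
  rewrite Fx, Fy in E. assert (HH := HA x y p Hx Hy Hp).
  destruct (Rmult_integral (x - y) (Aa (INR n) tau gamma x y p)) as [E1|E1]. lra. lra. lra. Qed.

Lemma lipd p q : Rabs p < s -> Rabs q < s -> Rabs (d q - d p) <= K / c0 * Rabs (q - p).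
Proof. intros Hp Hq. destruct (Hd p Hp) as [Hp1 Hp2]. destruct (Hd q Hq) as [Hq1 Hq2].
  assert (E1 := F_x n tau gamma (d q) (d p) q). assert (E2 := F_p n tau gamma (d p) p q).
  assert (HAq := HA (d q) (d p) q Hq1 Hp1 ltac:(lra)).
  assert (HBq := HB (d p) p q Hp1 ltac:(lra) ltac:(lra)).
  set (A := Aa (INR n) tau gamma (d q) (d p) q) in *.
  set (B := Bb (INR n) tau (d p) p q) in *.
  assert (E : (d q - d p) * A = - ((q - p) * B)) by lra.
  assert (E' : Rabs (d q - d p) * Rabs A = Rabs (q - p) * Rabs B).
  { rewrite <- !Rabs_mult, E, Rabs_Ropp. auto. }
  rewrite (Rabs_left A) in E' by lra.
  assert (0 <= Rabs (q - p)) by apply Rabs_pos.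
  assert (0 <= Rabs (d q - d p)) by apply Rabs_pos.
  apply Rmult_le_reg_r with c0; auto.
  replace (K / c0 * Rabs (q - p) * c0) with (K * Rabs (q - p)) by (field; lra).
  nra. Qed.

Lemma contG p : Rabs p < s ->
  continuous (fun z : R * R => - Bb (INR n) tau (d p) p (snd z) / Aa (INR n) tau gamma (fst z) (d p) (snd z))
    (d p, p).
Proof. intros Hp. destruct (Hd p Hp) as [Hp1 _].
  unfold Rdiv. apply c_mult. apply c_opp. unfold Bb, Lf, Qf. cont.
  apply c_inv. unfold Aa, Lf, Qf. cont.
  simpl. assert (HH := HA (d p) (d p) p Hp1 Hp1 ltac:(lra)). lra. Qed.

Lemma derd p : Rabs p < s -> derivable_pt_lim d p (Phi (INR n) tau gamma (d p) p).
Proof. intros Hp eps Heps.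
  destruct (cont2_ball (fun u v => - Bb (INR n) tau (d p) p v / Aa (INR n) tau gamma u (d p) v) (d p) p eps (contG p Hp) Heps) as [rho [Hrho Hball]].
  set (del := Rmin (Rmin rho (rho * c0 / (K + 1))) (s - Rabs p)).
  assert (Hdel : 0 < del).
  { unfold del. apply Rmin_pos. apply Rmin_pos. lra. apply Rdiv_lt_0_compat; nra. lra. }
  exists (mkposreal del Hdel). simpl. intros h Hh0 Hh.
  assert (Hh1 : Rabs h < rho) by (unfold del in Hh; eapply Rlt_le_trans; [apply Hh|];
     eapply Rle_trans; [apply Rmin_l| apply Rmin_l]).
  assert (Hh2 : Rabs h < rho * c0 / (K + 1)) by (unfold del in Hh; eapply Rlt_le_trans; [apply Hh|];
     eapply Rle_trans; [apply Rmin_l| apply Rmin_r]).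
  assert (Hh3 : Rabs h < s - Rabs p) by (unfold del in Hh; eapply Rlt_le_trans; [apply Hh|]; apply Rmin_r).
  assert (Hq : Rabs (p + h) < s).
  { assert (Rabs (p + h) <= Rabs p + Rabs h) by apply Rabs_triang. lra. }
  destruct (Hd p Hp) as [Hp1 Hp2]. destruct (Hd (p+h) Hq) as [Hq1 Hq2].
  assert (E1 := F_x n tau gamma (d (p+h)) (d p) (p+h)). assert (E2 := F_p n tau gamma (d p) p (p+h)).
  assert (HAq := HA (d (p+h)) (d p) (p+h) Hq1 Hp1 ltac:(lra)).
  assert (Hl := lipd p (p+h) Hp Hq).
  replace (p + h - p) with h in Hl by ring.
  assert (Hl2 : Rabs (d (p + h) - d p) < rho).
  { assert (K / c0 * Rabs h <= rho * K / (K+1)).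
    { apply Rmult_le_reg_r with c0; auto.
      replace (K / c0 * Rabs h * c0) with (K * Rabs h) by (field; lra).
      replace (rho * K / (K + 1) * c0) with (K * (rho * c0 / (K+1))) by (field; lra).
      apply Rmult_le_compat_l; lra. }
    assert (rho * K / (K+1) < rho).
    { apply Rmult_lt_reg_r with (K+1). lra. unfold Rdiv. rewrite Rmult_assoc, Rinv_l by lra. nra. }
    lra. }
  specialize (Hball (d (p+h)) (p+h) Hl2 ltac:(replace (p+h-p) with h by ring; auto)).
  replace ((d (p + h) - d p) / h) with
     (- Bb (INR n) tau (d p) p (p + h) / Aa (INR n) tau gamma (d (p + h)) (d p) (p + h)).
  apply Hball.
  set (A := Aa (INR n) tau gamma (d (p + h)) (d p) (p + h)) in *.
  set (B := Bb (INR n) tau (d p) p (p + h)) in *.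
  replace (p + h - p) with h in E2 by ring.
  rewrite Hq2, Hp2 in *.
  field_simplify_eq.
  replace (A * d (p + h) - A * d p) with ((d (p + h) - d p) * A) by ring. lra.
  split; [auto | lra].
Qed.

Ltac ckt IH := repeat match goal with
  | |- Ck _ _ _ (fun y => _ + _) => apply Ck_plus
  | |- Ck _ _ _ (fun y => _ - _) => apply Ck_minus
  | |- Ck _ _ _ (fun y => _ * _) => apply Ck_mult
  | |- Ck _ _ _ (fun y => - _) => apply Ck_opp
  | |- Ck _ _ _ d => exact IH
  | |- Ck _ _ _ (fun y => d y) => exact IH
  | |- Ck _ _ _ (fun y => y) => apply Ck_id
  | |- Ck _ _ _ (Rmult ?c) => apply (Ck_mult _ _ _ (fun _ => c) (fun y => y))
  | |- Ck _ _ _ (fun y => _) => apply Ck_const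
  end.

Lemma Ckd k : Ck (-s) s k d.
Proof. induction k. simpl; auto.
  simpl. exists (fun p => Phi (INR n) tau gamma (d p) p). split.
  - intros x Hx. apply is_derive_Reals. apply derd. apply Rabs_def1; lra.
  - unfold Phi. apply Ck_div.
    + intros x Hx. assert (Hx' : Rabs x < s) by (apply Rabs_def1; lra).
      destruct (Hd x Hx') as [H1 _]. assert (HH := HA (d x) (d x) x H1 H1 ltac:(lra)). lra.
    + unfold Bb, Lf, Qf. ckt IHk.
    + unfold Aa, Lf, Qf. ckt IHk.
Qed.

End S.

Lemma cont1_ball (f : R -> R) x0 e : continuous f x0 -> 0 < e ->
  exists r, 0 < r /\ forall x, Rabs (x - x0) < r -> Rabs (f x - f x0) < e.
Proof. intros Hc He.
  assert (Hl := Hc (ball (f x0) (mkposreal e He)) (locally_ball _ _)).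
  destruct Hl as [r Hr]. exists r. split. apply cond_pos.
  intros x Hx. apply (Hr x). apply ballR; auto. Qed.

Lemma coef_d n tau gamma : 0 < tau -> 0 < gamma -> 2 <= INR n ->
  Phi (INR n) tau gamma (delta0 n tau gamma) 0 =
  2 * tau * (INR n - 1) * delta0 n tau gamma * (INR n - 4 + delta0 n tau gamma)
  / (gamma * (INR n + 3 * delta0 n tau gamma)
     + tau * (INR n - 2) * (INR n + 3 * delta0 n tau gamma - 4)).
Proof. intros Ht Hg HN.
  assert (Hd0 := d0_bounds n tau gamma Ht Hg HN).
  unfold Phi. rewrite A0_val by auto.
  set (N := INR n) in *. set (d0 := delta0 n tau gamma) in *.
  assert (Hrel : d0 * (gamma + tau * (N - 2)) = 2 * tau * (N - 2)).
  { unfold d0, delta0. fold N. field. nra. }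
  replace (gamma * (N + 3 * d0) + tau * (N - 2) * (N + 3 * d0 - 4))
    with ((gamma + tau * (N-2)) * (N + d0)) by nra.
  unfold Bb, Lf, Qf. field. split; nra. Qed.

Lemma coef_a n tau gamma : 0 < tau -> 0 < gamma -> 2 <= INR n ->
  4 * tau * (INR n - 1) * (INR n - 2) / (tau * (INR n + 2) * (INR n - 2) + gamma * INR n)
  = (INR n - 1) * (2 * delta0 n tau gamma / (INR n + delta0 n tau gamma)).
Proof. intros Ht Hg HN. unfold delta0.
  assert (0 < gamma + tau * (INR n - 2)) by nra.
  field. split. lra. nra. Qed.

Theorem mainTheorem8 (n : nat) (tau gamma : R) :
  (2 <= n)%nat -> 0 < tau -> 0 < gamma ->
  exists (eps : R) (d : R -> R),
    0 < eps /\
    smooth_on (- eps) eps d /\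
    d 0 = delta0 n tau gamma /\
    (forall phi, - eps < phi < eps -> F n tau gamma (d phi) phi = 0) /\
    (forall (eps' : R) (g : R -> R),
        0 < eps' -> smooth_on (- eps') eps' g -> g 0 = delta0 n tau gamma ->
        (forall phi, - eps' < phi < eps' -> F n tau gamma (g phi) phi = 0) ->
        exists eps'', 0 < eps'' /\
          forall phi, - eps'' < phi < eps'' -> g phi = d phi) /\
    bigO2 (fun phi => d phi -
      (delta0 n tau gamma
       + phi * (2 * tau * (INR n - 1) * delta0 n tau gamma
                  * (INR n - 4 + delta0 n tau gamma)
                / (gamma * (INR n + 3 * delta0 n tau gamma)
                   + tau * (INR n - 2) * (INR n + 3 * delta0 n tau gamma - 4))))) /\
    bigO2 (fun phi => alpha n (d phi) phi -
      ((INR n - 2)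
       - phi * (4 * tau * (INR n - 1) * (INR n - 2)
                / (tau * (INR n + 2) * (INR n - 2) + gamma * INR n)))) /\
    bigO2 (fun phi => Rcci tau gamma (alpha n (d phi) phi) -
      ((INR n - 2) * tau / gamma
       - phi * (tau / gamma)
           * (4 * tau * (INR n - 1) * (INR n - 2)
              / (tau * (INR n + 2) * (INR n - 2) + gamma * INR n)))).
Proof.
  intros Hn Ht Hg. assert (HN := INR2 n Hn).
  assert (Hd0 := d0_bounds n tau gamma Ht Hg HN).
  destruct (setup n tau gamma Hn Ht Hg) as [r [c0 [K [Hr [Hr1 [Hc0 [HK [HA HB]]]]]]]].
  set (d0 := delta0 n tau gamma) in *.
  set (s := Rmin r (r * c0 / (K + 1))).
  assert (Hs : 0 < s) by (apply Rmin_pos; [lra | apply Rdiv_lt_0_compat; nra]).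
  assert (Hsr : s <= r) by apply Rmin_l.
  assert (Hs2 : s <= r * c0 / (K + 1)) by apply Rmin_r.
  assert (HsK : s * K < r * c0).
  { apply Rle_lt_trans with (r * c0 / (K + 1) * K). apply Rmult_le_compat_r; lra.
    apply Rmult_lt_reg_r with (K+1). lra. unfold Rdiv.
    replace (r * c0 * / (K + 1) * K * (K + 1)) with (r * c0 * K * ((K+1) * / (K + 1))) by ring.
    rewrite Rinv_r by lra. nra. }
  assert (Hsign : forall p, Rabs p < s ->
     F n tau gamma (d0 - r) p > 0 /\ F n tau gamma (d0 + r) p < 0).
  { intros p Hp.
    assert (E0 := F_p n tau gamma d0 0 p). rewrite F0 in E0 by auto. fold d0 in E0.
    assert (HBp := HB d0 0 p ltac:(unfold Rminus; rewrite Rplus_opp_r, Rabs_R0; lra)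
                   ltac:(rewrite Rabs_R0; lra) ltac:(lra)).
    assert (Hpb : Rabs (p * Bb (INR n) tau d0 0 p) < r * c0).
    { rewrite Rabs_mult. assert (0 <= Rabs p) by apply Rabs_pos. nra. }
    apply Rabs_def2 in Hpb.
    assert (E1 := F_x n tau gamma (d0 - r) d0 p).
    assert (E2 := F_x n tau gamma (d0 + r) d0 p).
    assert (HA1 := HA (d0 - r) d0 p ltac:(replace (d0 - r - d0) with (-r) by ring; rewrite Rabs_Ropp, Rabs_right; lra)
       ltac:(unfold Rminus; rewrite Rplus_opp_r, Rabs_R0; lra) ltac:(lra)).
    assert (HA2 := HA (d0 + r) d0 p ltac:(replace (d0 + r - d0) with r by ring; rewrite Rabs_right; lra)
       ltac:(unfold Rminus; rewrite Rplus_opp_r, Rabs_R0; lra) ltac:(lra)).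
    replace (d0 - r - d0) with (-r) in E1 by ring. replace (d0 + r - d0) with r in E2 by ring.
    replace (p - 0) with p in E0 by ring.
    split; nra. }
  assert (X : forall p, Rabs p < s -> {z | d0 - r <= z <= d0 + r /\ F n tau gamma z p = 0}).
  { intros p Hp. destruct (Hsign p Hp) as [H1 H2].
    destruct (IVT (fun z => - F n tau gamma z p) (d0 - r) (d0 + r) (contF n tau gamma p)
       ltac:(lra) ltac:(lra) ltac:(lra)) as [z [Hz1 Hz2]].
    exists z. split; auto. lra. }
  set (d := fun p => match Rlt_dec (Rabs p) s with left H => proj1_sig (X p H) | right _ => d0 end).
  assert (Hd : forall p, Rabs p < s -> Rabs (d p - d0) <= r /\ F n tau gamma (d p) p = 0).
  { intros p Hp. unfold d. destruct (Rlt_dec (Rabs p) s) as [H|H]; [|contradiction].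
    destruct (X p H) as [z [Hz1 Hz2]]. simpl. split; auto. apply Rabs_le. lra. }
  assert (Hdd0 : d 0 = d0).
  { destruct (Hd 0 ltac:(rewrite Rabs_R0; lra)) as [H1 H2].
    apply (uniqF n tau gamma r c0 HA Hc0 (d 0) d0 0); auto.
    unfold Rminus; rewrite Rplus_opp_r, Rabs_R0; lra. rewrite Rabs_R0; lra.
    unfold d0; apply F0; auto. }
  assert (Hsm : smooth_on (-s) s d).
  { apply Ck_smooth. intros k. apply (Ckd n tau gamma r c0 K s d); auto. }
  destruct (taylor2 s d Hs Hsm) as [l [Hl HO]].
  assert (Hl' : l = Phi (INR n) tau gamma d0 0).
  { apply (uniqueness_limite d 0). auto. rewrite <- Hdd0.
    apply (derd n tau gamma r c0 K s d); auto. rewrite Rabs_R0; lra. }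
  rewrite Hl', Hdd0 in HO. unfold d0 in HO. rewrite coef_d in HO by auto. fold d0 in HO.
  assert (Halpha : bigO2 (fun phi => alpha n (d phi) phi -
      ((INR n - 2) - phi * ((INR n - 1) * (2 * d0 / (INR n + d0)))))).
  { exists (2 * (INR n - 1) * (K / c0)), s. split; auto.
    intros p Hp. destruct (Hd p Hp) as [H1 _].
    assert (Hl2 : Rabs (d p - d 0) <= K / c0 * Rabs (p - 0))
      by (apply (lipd n tau gamma r c0 K s d); auto; rewrite Rabs_R0; lra).
    rewrite Hdd0, Rminus_0_r in Hl2.
    assert (Hu : d0 - r <= d p <= d0 + r) by (pose proof (abs_bounds (d p - d0)); lra).
    set (u := d p) in *. set (N := INR n) in *.
    assert (HP1 : 1 <= N + u) by lra.
    assert (HP2 : N <= N + d0) by lra.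
    set (Z := 2 * N * (N - 1) / ((N + u) * (N + d0))).
    unfold alpha. fold N.
    replace (N - 2 - (N - 1) * p * (2 * u / (N + u)) - (N - 2 - p * ((N - 1) * (2 * d0 / (N + d0)))))
      with (- (p * (u - d0) * Z)) by (unfold Z; field; lra).
    rewrite Rabs_Ropp, !Rabs_mult.
    assert (HZ : Rabs Z <= 2 * (N - 1)).
    { unfold Z. rewrite Rabs_right. 
      apply Rmult_le_reg_r with ((N + u) * (N + d0)). nra.
      unfold Rdiv. rewrite Rmult_assoc, Rinv_l by nra.
      assert (N <= (N+u)*(N+d0)) by nra. nra.
      apply Rle_ge, Rmult_le_pos. nra. left; apply Rinv_0_lt_compat; nra. }
    assert (0 <= Rabs p) by apply Rabs_pos. assert (0 <= Rabs (u - d0)) by apply Rabs_pos.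
    assert (0 <= Rabs Z) by apply Rabs_pos.
    assert (0 <= K / c0) by (apply Rdiv_le_0_compat; lra).
    replace (p ^ 2) with (Rabs p * Rabs p) by (rewrite <- Rabs_mult; simpl; rewrite Rmult_1_r; apply Rabs_right; nra).
    assert (Rabs p * Rabs (u - d0) <= Rabs p * (K / c0 * Rabs p)) by (apply Rmult_le_compat_l; auto).
    apply Rle_trans with (Rabs p * (K / c0 * Rabs p) * Rabs Z).
    apply Rmult_le_compat_r; auto.
    assert (0 <= Rabs p * (K / c0 * Rabs p)) by nra.
    apply Rle_trans with (Rabs p * (K / c0 * Rabs p) * (2 * (N - 1))).
    apply Rmult_le_compat_l; auto. nra. }
  assert (Ea : forall x : R, ((INR n - 1) * (2 * d0 / (INR n + d0))) =
      (4 * tau * (INR n - 1) * (INR n - 2) / (tau * (INR n + 2) * (INR n - 2) + gamma * INR n))).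
  { intros _. unfold d0. rewrite coef_a by auto. reflexivity. }
  rewrite (Ea 0) in Halpha.
  exists s, d. split; auto. split; auto. split; auto. split.
  { intros p Hp. apply Hd. apply Rabs_def1; lra. }
  split.
  { intros e' g He' [D [HD0 HD]] Hg0 HgF.
    assert (Hc : continuous (D 0%nat) 0).
    { apply (@ex_derive_continuous R_AbsRing R_NormedModule). exists (D 1%nat 0). apply is_derive_Reals. apply HD. lra. }
    destruct (cont1_ball (D 0%nat) 0 r Hc Hr) as [rho [Hrho Hb]].
    rewrite HD0 in Hb by lra. rewrite Hg0 in Hb.
    exists (Rmin rho (Rmin e' s)). split. apply Rmin_pos; auto. apply Rmin_pos; auto.
    intros p Hp.
    assert (H1 : Rabs p < rho).
    { apply Rabs_def1. assert (Rmin rho (Rmin e' s) <= rho) by apply Rmin_l. lra.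
      assert (Rmin rho (Rmin e' s) <= rho) by apply Rmin_l. lra. }
    assert (Hm : Rmin rho (Rmin e' s) <= Rmin e' s) by apply Rmin_r.
    assert (Hm1 : Rmin e' s <= e') by apply Rmin_l.
    assert (Hm2 : Rmin e' s <= s) by apply Rmin_r.
    assert (Hps : Rabs p < s) by (apply Rabs_def1; lra).
    specialize (Hb p ltac:(rewrite Rminus_0_r; auto)).
    rewrite HD0 in Hb by lra.
    destruct (Hd p Hps) as [Hd1 Hd2].
    apply (uniqF n tau gamma r c0 HA Hc0 (g p) (d p) p); auto; try lra.
    fold d0; lra. apply HgF; lra. }
  split. exact HO.
  split. exact Halpha.
  destruct Halpha as [C [e [He HC]]].
  exists (tau / gamma * C), e. split; auto. intros p Hp.
  specialize (HC p Hp).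
  set (a := alpha n (d p) p) in *.
  set (c := 4 * tau * (INR n - 1) * (INR n - 2) / (tau * (INR n + 2) * (INR n - 2) + gamma * INR n)) in *.
  replace (Rcci tau gamma a - ((INR n - 2) * tau / gamma - p * (tau / gamma) * c))
    with (tau / gamma * (a - (INR n - 2 - p * c))) by (unfold Rcci; field; lra).
  rewrite Rabs_mult. rewrite (Rabs_right (tau/gamma)) by (apply Rle_ge, Rdiv_le_0_compat; lra).
  rewrite Rmult_assoc. apply Rmult_le_compat_l. apply Rdiv_le_0_compat; lra. auto.
Qed.
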